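(* Fix $\tau>0$ and real numbers $V_r,V_b$. The function $\tilde h:\mathcal S^\circ\to\mathbb R$, $$\tilde h(r,b)=r(\log r-1)+b(\log b-1)+rV_r+bV_b+\frac{\bar\alpha}{2}(r^2+2rb+b^2)+\tau(1-\bar\gamma\rho)(\log(1-\bar\gamma\rho)-1),\quad\rho=r+b,$$ is strictly convex and belongs to $C^2(\mathcal S^\circ)$. Its gradient $\tilde h':\mathcal S^\circ\to\mathbb R^2$ is invertible (a bijection onto $\mathbb R^2$), and the inverse of its Hessian $\tilde h''$ is uniformly bounded on $\mathcal S^\circ$.
   Context: $\epsilon>0$, $d\in\{2,3\}$, $\bar\alpha=\epsilon^d\,2(d-1)\pi/d$, $\bar\gamma=\epsilon^d\pi/d$. $\mathcal S=\{(r,b)\in\mathbb R^2: r\ge0,\ b\ge0,\ r+b\le1/\bar\gamma\}$ with interior $\mathcal S^\circ$. *)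

(* Defs.v *)
From Stdlib Require Import Reals.
Open Scope R_scope.

Definition alpha_bar (eps : R) (d : nat) : R := eps ^ d * (2 * (INR d - 1) * PI / INR d).
Definition gamma_bar (eps : R) (d : nat) : R := eps ^ d * PI / INR d.

Definition S_int (eps : R) (d : nat) (r b : R) : Prop :=
  0 < r /\ 0 < b /\ r + b < 1 / gamma_bar eps d.

Definition htilde (eps : R) (d : nat) (tau Vr Vb : R) (r b : R) : R :=
  let rho := r + b in
  r * (ln r - 1) + b * (ln b - 1) + r * Vr + b * Vb
  + alpha_bar eps d / 2 * (r ^ 2 + 2 * r * b + b ^ 2)
  + tau * (1 - gamma_bar eps d * rho) * (ln (1 - gamma_bar eps d * rho) - 1).

Definition strictly_convex_on (P : R -> R -> Prop) (f : R -> R -> R) : Prop :=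
  forall x1 y1 x2 y2 t, P x1 y1 -> P x2 y2 -> (x1 <> x2 \/ y1 <> y2) ->
    0 < t < 1 ->
    f (t * x1 + (1 - t) * x2) (t * y1 + (1 - t) * y2)
      < t * f x1 y1 + (1 - t) * f x2 y2.

Definition partial1 (f : R -> R -> R) (x y l : R) : Prop :=
  derivable_pt_lim (fun s => f s y) x l.
Definition partial2 (f : R -> R -> R) (x y l : R) : Prop :=
  derivable_pt_lim (fun s => f x s) y l.

Definition continuous2_at (f : R -> R -> R) (x y : R) : Prop :=
  forall e, 0 < e -> exists dl, 0 < dl /\
    forall x' y', Rabs (x' - x) < dl -> Rabs (y' - y) < dl ->
      Rabs (f x' y' - f x y) < e.

(* Main.v *)
Require Import Defs.
From Stdlib Require Import Reals.
From Coquelicot Require Import Coquelicot.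
From Stdlib Require Import Lra Psatz.
Open Scope R_scope.

Lemma cont_eps (f : R -> R) x : continuity_pt f x ->
  forall e, 0 < e -> exists dl, 0 < dl /\ forall x', Rabs (x' - x) < dl -> Rabs (f x' - f x) < e.
Proof.
  intros Hc e He. destruct (Hc e He) as [dl [Hdl H]]. exists dl; split; [lra|].
  intros x' Hx'. destruct (Req_dec x' x) as [->|Hne].
  - unfold Rminus; rewrite Rplus_opp_r, Rabs_R0; lra.
  - apply (H x'). split; [split; [exact I| auto] | exact Hx'].
Qed.

Lemma cont_sep (A B C : R -> R) x y :
  continuity_pt A x -> continuity_pt B y -> continuity_pt C (x + y) ->
  continuous2_at (fun x y => A x + B y + C (x + y)) x y.
Proof.
  intros HA HB HC e He.
  destruct (cont_eps A x HA (e/3)) as [d1 [Hd1 H1]]; [lra|].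
  destruct (cont_eps B y HB (e/3)) as [d2 [Hd2 H2]]; [lra|].
  destruct (cont_eps C (x+y) HC (e/3)) as [d3 [Hd3 H3]]; [lra|].
  exists (Rmin d1 (Rmin d2 (d3/2))). split.
  { apply Rmin_pos; [lra| apply Rmin_pos; lra]. }
  intros x' y' Hx Hy.
  assert (Hm1 := Rmin_l d1 (Rmin d2 (d3/2))).
  assert (Hm2 := Rmin_r d1 (Rmin d2 (d3/2))).
  assert (Hm3 := Rmin_l d2 (d3/2)). assert (Hm4 := Rmin_r d2 (d3/2)).
  specialize (H1 x' ltac:(lra)). specialize (H2 y' ltac:(lra)).
  assert (Hs : Rabs (x' + y' - (x + y)) < d3).
  { replace (x' + y' - (x + y)) with ((x'-x) + (y'-y)) by ring.
    eapply Rle_lt_trans; [apply Rabs_triang|]. lra. }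
  specialize (H3 _ Hs).
  replace (A x' + B y' + C (x' + y') - (A x + B y + C (x + y)))
    with ((A x' - A x) + (B y' - B y) + (C (x'+y') - C (x+y))) by ring.
  eapply Rle_lt_trans; [apply Rabs_triang|].
  eapply Rle_lt_trans; [apply Rplus_le_compat_r; apply Rabs_triang|]. lra.
Qed.

Lemma cont2_ext (f k : R -> R -> R) x y : (forall x y, f x y = k x y) ->
  continuous2_at k x y -> continuous2_at f x y.
Proof. intros E H e He. destruct (H e He) as [dl [Hd Hk]]. exists dl; split; auto.
  intros; rewrite !E; auto. Qed.

Lemma exd_cont f x : ex_derive f x -> continuity_pt f x.
Proof. intros H. apply continuity_pt_filterlim. apply (ex_derive_continuous (V:=R_NormedModule)). exact H. Qed.

Definition psi (x : R) := x * (ln x - 1).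

Lemma ln_key x z : 0 < x -> 0 < z -> x * ln z <= x * ln x + z - x /\ (x <> z -> x * ln z < x * ln x + z - x).
Proof.
  intros Hx Hz.
  assert (E : ln (z / x) = ln z - ln x) by (apply ln_div; lra).
  assert (Ex : exp (ln (z/x)) = z / x) by (apply exp_ln; apply Rdiv_lt_0_compat; lra).
  assert (Hzx : x * (z / x) = z) by (field; lra).
  split.
  - assert (H := exp_ineq1_le (ln (z/x))). rewrite Ex, E in H.
    apply Rmult_le_compat_l with (r := x) in H; lra.
  - intros Hne. assert (Hn : ln (z/x) <> 0).
    { intro H0. rewrite H0, exp_0 in Ex. apply Hne. 
      assert (x * 1 = x * (z/x)) by (rewrite Ex; ring). lra. }
    assert (H := exp_ineq1 _ Hn). rewrite Ex, E in H.
    apply Rmult_lt_compat_l with (r := x) in H; lra.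
Qed.

Lemma psi_conv x y t : 0 < x -> 0 < y -> 0 < t < 1 ->
  psi (t*x + (1-t)*y) <= t * psi x + (1-t) * psi y /\
  (x <> y -> psi (t*x + (1-t)*y) < t * psi x + (1-t) * psi y).
Proof.
  intros Hx Hy Ht. set (z := t*x + (1-t)*y).
  assert (Hz : 0 < z) by (unfold z; nra).
  destruct (ln_key x z Hx Hz) as [L1 S1]. destruct (ln_key y z Hy Hz) as [L2 S2].
  unfold psi. split.
  - assert (Ez : z * ln z = t * (x * ln z) + (1-t) * (y * ln z)) by (unfold z; ring).
    assert (A1 := Rmult_le_compat_l t _ _ ltac:(lra) L1).
    assert (A2 := Rmult_le_compat_l (1-t) _ _ ltac:(lra) L2).
    unfold z in *. nra.
  - intros Hne. assert (x <> z). { unfold z; intro E. apply Hne. nra. }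
    specialize (S1 H).
    assert (Ez : z * ln z = t * (x * ln z) + (1-t) * (y * ln z)) by (unfold z; ring).
    assert (A1 := Rmult_lt_compat_l t _ _ ltac:(lra) S1).
    assert (A2 := Rmult_le_compat_l (1-t) _ _ ltac:(lra) L2).
    unfold z in *. nra.
Qed.

Definition hh (a g tau Vr Vb : R) (r b : R) : R :=
  let rho := r + b in
  r * (ln r - 1) + b * (ln b - 1) + r * Vr + b * Vb
  + a / 2 * (r ^ 2 + 2 * r * b + b ^ 2)
  + tau * (1 - g * rho) * (ln (1 - g * rho) - 1).

Lemma hform a g tau Vr Vb r b : hh a g tau Vr Vb r b =
  psi r + psi b + r*Vr + b*Vb + a/2*(r+b)^2 + tau * psi (1 - g*(r+b)).
Proof. unfold hh, psi; simpl; ring. Qed.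

Lemma wpos g r b : 0 < g -> r + b < 1 / g -> 0 < 1 - g * (r + b).
Proof. intros Hg H. assert (g * (r+b) < g * (1/g)) by (apply Rmult_lt_compat_l; lra).
  replace (g * (1/g)) with 1 in H0 by (field; lra). lra. Qed.

Lemma conv_main a g tau Vr Vb (ha : 0 <= a) (hg : 0 < g) (ht : 0 < tau) :
  strictly_convex_on (fun r b => 0 < r /\ 0 < b /\ r + b < 1 / g) (hh a g tau Vr Vb).
Proof.
  intros x1 y1 x2 y2 t [P1 [P2 P3]] [Q1 [Q2 Q3]] Hne Ht. rewrite !hform.
  assert (W1 := wpos g _ _ hg P3). assert (W2 := wpos g _ _ hg Q3).
  replace (1 - g*(t*x1+(1-t)*x2 + (t*y1+(1-t)*y2))) with
    (t*(1 - g*(x1+y1)) + (1-t)*(1 - g*(x2+y2))) by ring.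
  destruct (psi_conv _ _ t W1 W2 Ht) as [Cw _].
  destruct (psi_conv x1 x2 t P1 Q1 Ht) as [Cx Sx].
  destruct (psi_conv y1 y2 t P2 Q2 Ht) as [Cy Sy].
  assert (Qd : a/2 * (t * x1 + (1 - t) * x2 + (t * y1 + (1 - t) * y2)) ^ 2 <=
     t * (a/2*(x1+y1)^2) + (1-t) * (a/2*(x2+y2)^2)).
  { assert (E : t * (a/2*(x1+y1)^2) + (1-t) * (a/2*(x2+y2)^2) - 
       a/2 * (t * x1 + (1 - t) * x2 + (t * y1 + (1 - t) * y2)) ^ 2
       = a/2 * (t*(1-t)) * ((x1+y1) - (x2+y2))^2) by ring.
    assert (0 <= a/2 * (t*(1-t)) * ((x1+y1) - (x2+y2))^2).
    { apply Rmult_le_pos; [apply Rmult_le_pos; nra| apply pow2_ge_0]. }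
    lra. }
  assert (Tw := Rmult_le_compat_l tau _ _ ltac:(lra) Cw).
  set (X := t * x1 + (1 - t) * x2) in *. set (Y := t * y1 + (1 - t) * y2) in *.
  assert (EV : X * Vr = t*(x1*Vr) + (1-t)*(x2*Vr)) by (unfold X; ring).
  assert (EB : Y * Vb = t*(y1*Vb) + (1-t)*(y2*Vb)) by (unfold Y; ring).
  set (w1 := 1 - g * (x1 + y1)) in *. set (w2 := 1 - g * (x2 + y2)) in *.
  assert (ET : tau * (t * psi w1 + (1 - t) * psi w2) = t*(tau*psi w1) + (1-t)*(tau*psi w2)) by ring.
  assert (ER : forall p1 p2 p3 p4 p5 p6 q1 q2 q3 q4 q5 q6,
     t * (p1 + p2 + p3 + p4 + p5 + p6) + (1-t) * (q1+q2+q3+q4+q5+q6) =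
     (t*p1 + (1-t)*q1) + (t*p2 + (1-t)*q2) + (t*p3 + (1-t)*q3) + (t*p4 + (1-t)*q4)
     + (t*p5 + (1-t)*q5) + (t*p6 + (1-t)*q6)) by (intros; ring).
  rewrite ER. rewrite EV, EB. rewrite ET in Tw.
  destruct Hne as [Hne|Hne].
  - specialize (Sx Hne). lra.
  - specialize (Sy Hne). lra.
Qed.

Definition FF a g tau x := a*x - tau*g*ln(1-g*x).
Definition G1 a g tau Vr (r b : R) := ln r + Vr + FF a g tau (r+b).
Definition G2 a g tau Vb (r b : R) := ln b + Vb + FF a g tau (r+b).
Definition cc a g tau x := a + tau*g*g/(1-g*x).
Definition K11 a g tau (r b : R) := / r + cc a g tau (r+b).
Definition K12 a g tau (r b : R) := cc a g tau (r+b).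
Definition K22 a g tau (r b : R) := / b + cc a g tau (r+b).

Lemma sep_form (f : R -> R -> R) A B C x y : (forall x y, f x y = A x + B y + C (x+y)) ->
  continuity_pt A x -> continuity_pt B y -> continuity_pt C (x + y) -> continuous2_at f x y.
Proof. intros E HA HB HC. apply (cont2_ext f (fun x y => A x + B y + C (x+y))); auto.
  apply cont_sep; auto. Qed.

Lemma cst_cont (c y : R) : continuity_pt (fun _ => c) y.
Proof. apply continuity_pt_const. intros ? ?; reflexivity. Qed.

Lemma derivs a g tau Vr Vb r b (hg : 0 < g) (Hr : 0 < r) (Hb : 0 < b) (Hw : 0 < 1 - g*(r+b)) :
  let h := hh a g tau Vr Vb in
  let g1 := G1 a g tau Vr in let g2 := G2 a g tau Vb in
  let H11 := K11 a g tau in let H12 := K12 a g tau in let H22 := K22 a g tau in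
       partial1 h r b (g1 r b) /\ partial2 h r b (g2 r b) /\
       partial1 g1 r b (H11 r b) /\ partial2 g1 r b (H12 r b) /\
       partial1 g2 r b (H12 r b) /\ partial2 g2 r b (H22 r b) /\
       continuous2_at h r b /\ continuous2_at g1 r b /\ continuous2_at g2 r b /\
       continuous2_at H11 r b /\ continuous2_at H12 r b /\
       continuous2_at H12 r b /\ continuous2_at H22 r b.
Proof.
  intros. unfold partial1, partial2.
  assert (Hw' : 1 - g*(r+b) <> 0) by lra.
  split; [| split; [| split; [| split; [| split; [| split]]]]].
  1-6: apply is_derive_Reals; unfold h, g1, g2, H11, H12, H22, hh, G1, G2, K11, K12, K22, FF, cc;
       cbv beta zeta; auto_derive; [repeat split; lra | unfold Rminus; field; unfold Rminus in Hw'; lra].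
  split; [| split; [| split; [| split; [| split; [| split]]]]].
  - apply (sep_form _ (fun s => psi s + s*Vr) (fun s => psi s + s*Vb)
          (fun s => a/2*s^2 + tau*psi (1 - g*s))).
    + intros x y; unfold h; rewrite hform; ring.
    + apply exd_cont; unfold psi; auto_derive; lra.
    + apply exd_cont; unfold psi; auto_derive; lra.
    + apply exd_cont; unfold psi; auto_derive; lra.
  - apply (sep_form _ (fun s => ln s + Vr) (fun _ => 0) (FF a g tau)).
    + intros x y; unfold g1, G1; ring.
    + apply exd_cont; auto_derive; lra.
    + apply cst_cont.
    + apply exd_cont; unfold FF; auto_derive; lra.
  - apply (sep_form _ (fun _ => 0) (fun s => ln s + Vb) (FF a g tau)).
    + intros x y; unfold g2, G2; ring.
    + apply cst_cont.
    + apply exd_cont; auto_derive; lra.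
    + apply exd_cont; unfold FF; auto_derive; lra.
  - apply (sep_form _ (fun s => / s) (fun _ => 0) (cc a g tau)).
    + intros x y; unfold H11, K11; ring.
    + apply exd_cont; auto_derive; lra.
    + apply cst_cont.
    + apply exd_cont; unfold cc; auto_derive; lra.
  - apply (sep_form _ (fun _ => 0) (fun _ => 0) (cc a g tau)).
    + intros x y; unfold H12, K12; ring.
    + apply cst_cont.
    + apply cst_cont.
    + apply exd_cont; unfold cc; auto_derive; lra.
  - apply (sep_form _ (fun _ => 0) (fun _ => 0) (cc a g tau)).
    + intros x y; unfold H12, K12; ring.
    + apply cst_cont.
    + apply cst_cont.
    + apply exd_cont; unfold cc; auto_derive; lra.
  - apply (sep_form _ (fun _ => 0) (fun s => / s) (cc a g tau)).
    + intros x y; unfold H22, K22; ring.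
    + apply cst_cont.
    + apply exd_cont; auto_derive; lra.
    + apply exd_cont; unfold cc; auto_derive; lra.
Qed.

Lemma abs_bd x N D M : 0 < D -> x * D = N -> -(M*D) <= N <= M*D -> Rabs x <= M.
Proof. intros HD E [H1 H2]. apply Rabs_le. rewrite <- E in H1, H2. split.
  - apply Rmult_le_reg_r with D; lra.
  - apply Rmult_le_reg_r with D; lra. Qed.

Lemma hess_core p q c r b : 0 < r -> 0 < b -> r * p = 1 -> b * q = 1 -> 0 <= c ->
  let det := (p + c) * (q + c) - c * c in
  0 < det /\ Rabs ((q + c) / det) <= r + b /\ Rabs (- c / det) <= r + b /\ Rabs ((p+c)/det) <= r + b.
Proof.
  intros Hr Hb Ep Eq Hc det.
  assert (Hp : 0 < p) by nra. assert (Hq : 0 < q) by nra.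
  assert (Hd : 0 < det) by (unfold det; nra).
  assert (Ex : (r+b) * det = q + p + c + c*(r*q) + c*(b*p) + c).
  { unfold det. replace ((r + b) * ((p + c) * (q + c) - c * c)) with
      ((r*p)*q + (b*q)*p + c*(r*p) + c*(r*q) + c*(b*p) + c*(b*q)) by ring.
    rewrite Ep, Eq. ring. }
  assert (0 <= c*(r*q)) by (apply Rmult_le_pos; nra).
  assert (0 <= c*(b*p)) by (apply Rmult_le_pos; nra).
  split; [exact Hd|]. split; [|split].
  - apply (abs_bd _ (q+c) det); auto. field; lra. lra.
  - apply (abs_bd _ (-c) det); auto. field; lra. lra.
  - apply (abs_bd _ (p+c) det); auto. field; lra. lra.
Qed.

Lemma FF_mono a g tau x y (ha : 0 <= a) (hg : 0 < g) (ht : 0 < tau) :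
  0 <= x -> x <= y -> 0 < 1 - g*y -> FF a g tau x <= FF a g tau y.
Proof.
  intros Hx Hxy Hy. unfold FF.
  assert (ln (1 - g*y) <= ln (1 - g*x)) by (apply ln_le; nra).
  assert (tau*g*ln (1 - g*y) <= tau*g*ln (1 - g*x)) by (apply Rmult_le_compat_l; nra).
  nra.
Qed.

Lemma exp_le' x y : x <= y -> exp x <= exp y.
Proof. intros H. destruct (Rle_lt_or_eq_dec _ _ H) as [H'|H'].
  - left; apply exp_increasing; auto. - subst; lra. Qed.

Lemma solve_rho a g tau Kc (ha : 0 <= a) (hg : 0 < g) (ht : 0 < tau) (Kpos : 0 < Kc) :
  exists z, 0 < z /\ z < 1/g /\ ln z + FF a g tau z = ln Kc.
Proof.
  set (m := 1/(2*g)). set (C0 := FF a g tau m).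
  assert (Hm : 0 < m) by (unfold m; apply Rdiv_lt_0_compat; lra).
  assert (Hgm : 1 - g*m = 1/2) by (unfold m; field; lra).
  set (a0 := Rmin (m/2) (Kc*exp(-C0)/2)).
  assert (HeC : 0 < Kc*exp(-C0)) by (apply Rmult_lt_0_compat; auto; apply exp_pos).
  assert (Ha0 : 0 < a0) by (unfold a0; apply Rmin_pos; lra).
  assert (Ha1 : a0 <= m/2) by apply Rmin_l.
  assert (Ha2 : a0 <= Kc*exp(-C0)/2) by apply Rmin_r.
  set (D := ln Kc - ln m). set (E := exp (-(Rabs D + 1)/(tau*g))).
  assert (HE : 0 < E) by apply exp_pos.
  set (w := Rmin (1/2) E).
  assert (Hw0 : 0 < w) by (unfold w; apply Rmin_pos; lra).
  assert (Hw1 : w <= 1/2) by apply Rmin_l. assert (Hw2 : w <= E) by apply Rmin_r.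
  set (c0 := (1 - w)/g).
  assert (Hgc : 1 - g*c0 = w) by (unfold c0; field; lra).
  assert (Hmc : m <= c0).
  { unfold m, c0. apply Rmult_le_reg_l with g; auto.
    replace (g * (1/(2*g))) with (1/2) by (field; lra).
    replace (g * ((1-w)/g)) with (1-w) by (field; lra). lra. }
  set (Gf := fun x => ln x + FF a g tau x - ln Kc).
  assert (Hcont : forall x, a0 <= x <= c0 -> continuity_pt Gf x).
  { intros x [H1 H2]. assert (0 < 1 - g*x) by nra.
    apply exd_cont. unfold Gf, FF. auto_derive. repeat split; lra. }
  assert (HGa : Gf a0 < 0).
  { unfold Gf.
    assert (ln a0 < ln (Kc*exp(-C0))) by (apply ln_increasing; lra).
    rewrite ln_mult, ln_exp in H; auto; [|apply exp_pos].
    assert (FF a g tau a0 <= C0) by (unfold C0; apply FF_mono; auto; lra).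
    lra. }
  assert (HGc : 0 < Gf c0).
  { unfold Gf.
    assert (ln m <= ln c0) by (apply ln_le; lra).
    assert (ln w <= ln E) by (apply ln_le; lra).
    assert (LE : tau*g*ln E = -(Rabs D + 1)) by (unfold E; rewrite ln_exp; field; lra).
    assert (tau*g*ln w <= tau*g*ln E) by (apply Rmult_le_compat_l; nra).
    unfold FF. rewrite Hgc.
    assert (0 <= a * c0) by (apply Rmult_le_pos; lra).
    assert (D <= Rabs D) by apply RRle_abs.
    unfold D in *. lra. }
  destruct (Ranalysis5.IVT_interv Gf a0 c0 Hcont ltac:(lra) HGa HGc) as [z [[Hz1 Hz2] Hz]].
  exists z. split; [lra|split].
  - assert (c0 < 1/g). { unfold c0. apply Rmult_lt_reg_l with g; auto.
      replace (g * ((1-w)/g)) with (1-w) by (field; lra).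
      replace (g * (1/g)) with 1 by (field; lra). lra. }
    lra.
  - unfold Gf in Hz. lra.
Qed.

Lemma bij a g tau Vr Vb (ha : 0 <= a) (hg : 0 < g) (ht : 0 < tau) :
  forall u v, exists r b, (0 < r /\ 0 < b /\ r + b < 1 / g) /\
    G1 a g tau Vr r b = u /\ G2 a g tau Vb r b = v /\
    forall r' b', (0 < r' /\ 0 < b' /\ r' + b' < 1 / g) ->
      G1 a g tau Vr r' b' = u -> G2 a g tau Vb r' b' = v -> r' = r /\ b' = b.
Proof.
  intros u v. set (u' := u - Vr). set (v' := v - Vb).
  set (Kc := exp u' + exp v').
  assert (HK : 0 < Kc) by (unfold Kc; generalize (exp_pos u') (exp_pos v'); lra).
  destruct (solve_rho a g tau Kc ha hg ht HK) as [z [Hz0 [Hz1 Hz]]].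
  set (r := exp (u' - FF a g tau z)). set (b := exp (v' - FF a g tau z)).
  assert (Hz' : z = Kc * exp (- FF a g tau z)).
  { rewrite <- (exp_ln z) at 1; auto. replace (ln z) with (ln Kc + - FF a g tau z) by lra.
    rewrite exp_plus, exp_ln; auto. }
  assert (Hrb : r + b = z).
  { unfold r, b, Rminus. rewrite !exp_plus. transitivity (Kc * exp (- FF a g tau z)); [unfold Kc; ring | symmetry; exact Hz']. }
  
  assert (Hwz : 0 < 1 - g*z).
  { assert (g*z < g*(1/g)) by (apply Rmult_lt_compat_l; auto).
    replace (g*(1/g)) with 1 in H by (field; lra). lra. }
  exists r, b. split; [|split; [|split]].
  - split; [apply exp_pos| split; [apply exp_pos| lra]].
  - unfold G1. rewrite Hrb. unfold r. rewrite ln_exp. unfold u'. ring.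
  - unfold G2. rewrite Hrb. unfold b. rewrite ln_exp. unfold v'. ring.
  - intros r' b' [Hr' [Hb' Hs']] E1 E2.
    assert (Hw' : 0 < 1 - g*(r'+b')) by (apply wpos; auto).
    assert (R1 : r' = exp (u' - FF a g tau (r'+b'))).
    { unfold G1 in E1. rewrite <- (exp_ln r') at 1; auto. f_equal. unfold u'. lra. }
    assert (R2 : b' = exp (v' - FF a g tau (r'+b'))).
    { unfold G2 in E2. rewrite <- (exp_ln b') at 1; auto. f_equal. unfold v'. lra. }
    assert (Hrho : r' + b' = z).
    { destruct (Rtotal_order (r'+b') z) as [Hl|[He|Hl]]; auto; exfalso.
      - assert (FF a g tau (r'+b') <= FF a g tau z) by (apply FF_mono; auto; lra).
        assert (r <= r') by (rewrite R1; apply exp_le'; lra).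
        assert (b <= b') by (rewrite R2; apply exp_le'; lra). lra.
      - assert (FF a g tau z <= FF a g tau (r'+b')) by (apply FF_mono; auto; lra).
        assert (r' <= r) by (rewrite R1; apply exp_le'; lra).
        assert (b' <= b) by (rewrite R2; apply exp_le'; lra). lra. }
    rewrite Hrho in R1, R2. split; assumption.
Qed.

Theorem lemma1 (eps : R) (d : nat) (tau Vr Vb : R)
  (heps : 0 < eps) (hd : d = 2%nat \/ d = 3%nat) (htau : 0 < tau) :
  let h := htilde eps d tau Vr Vb in
  let P := S_int eps d in
  (* strict convexity *)
  strictly_convex_on P h /\
  (* C^2 on the interior, with gradient (g1,g2) and Hessian [[H11,H12],[H21,H22]] *)
  exists g1 g2 H11 H12 H21 H22 : R -> R -> R,
    (forall r b, P r b ->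
       partial1 h r b (g1 r b) /\ partial2 h r b (g2 r b) /\
       partial1 g1 r b (H11 r b) /\ partial2 g1 r b (H12 r b) /\
       partial1 g2 r b (H21 r b) /\ partial2 g2 r b (H22 r b) /\
       continuous2_at h r b /\ continuous2_at g1 r b /\ continuous2_at g2 r b /\
       continuous2_at H11 r b /\ continuous2_at H12 r b /\
       continuous2_at H21 r b /\ continuous2_at H22 r b) /\
    (* the gradient is a bijection from the interior of S onto R^2 *)
    (forall u v, exists r b, P r b /\ g1 r b = u /\ g2 r b = v /\
       forall r' b', P r' b' -> g1 r' b' = u -> g2 r' b' = v -> r' = r /\ b' = b) /\
    (* the Hessian is invertible and its inverse is uniformly bounded *)
    (exists M, forall r b, P r b ->
       let det := H11 r b * H22 r b - H12 r b * H21 r b in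
       det <> 0 /\
       Rabs (H22 r b / det) <= M /\ Rabs (- H12 r b / det) <= M /\
       Rabs (- H21 r b / det) <= M /\ Rabs (H11 r b / det) <= M).
Proof.
  intros h P.
  assert (Hd : 1 <= INR d) by (destruct hd; subst; simpl; lra).
  assert (Hed : 0 < eps ^ d) by (apply pow_lt; lra).
  assert (hg : 0 < gamma_bar eps d).
  { unfold gamma_bar. apply Rdiv_lt_0_compat; [apply Rmult_lt_0_compat; [lra| apply PI_RGT_0]| lra]. }
  assert (ha : 0 <= alpha_bar eps d).
  { unfold alpha_bar. apply Rmult_le_pos; [lra|]. apply Rdiv_le_0_compat; [|lra].
    apply Rmult_le_pos; [lra| left; apply PI_RGT_0]. }
  set (a := alpha_bar eps d) in *. set (g := gamma_bar eps d) in *.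
  split.
  { exact (conv_main a g tau Vr Vb ha hg htau). }
  exists (G1 a g tau Vr), (G2 a g tau Vb), (K11 a g tau), (K12 a g tau), (K12 a g tau), (K22 a g tau).
  split; [|split].
  - intros r b [Hr [Hb Hs]].
    exact (derivs a g tau Vr Vb r b hg Hr Hb (wpos g r b hg Hs)).
  - exact (bij a g tau Vr Vb ha hg htau).
  - exists (1/g). intros r b [Hr [Hb Hs]] det.
    assert (Hw := wpos g r b hg Hs).
    assert (Hc : 0 <= cc a g tau (r+b)).
    { unfold cc. apply Rplus_le_le_0_compat; auto. apply Rdiv_le_0_compat; [|lra].
      apply Rmult_le_pos; [apply Rmult_le_pos|]; lra. }
    destruct (hess_core (/r) (/b) (cc a g tau (r+b)) r b Hr Hb
       ltac:(field; lra) ltac:(field; lra) Hc) as [H0 [H1 [H2 H3]]].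
    unfold det, K11, K12, K22. cbv zeta in H0, H1, H2, H3. change (r + b < 1 / g) in Hs. split; [intro; lra|]. repeat split; lra.
Qed.
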